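(* Let $\varphi=\mathrm{vec}(A)$, $\varphi_0=\mathrm{vec}(A_0)$ with $A,A_0\in\mathbb{R}^{(p-r)\times r}$, $\|A\|_2<1$, $\|A_0\|_2<1$. If $$\|\sin\Theta\{U(\varphi),U(\varphi_0)\}\|_F\le\frac{(1-\|A_0\|_2^2)^2}{8(1+\|A_0\|_2^2)^2},$$ then $$\|U(\varphi)-U(\varphi_0)\|_F\le4\Big\{1+\frac{32\sqrt2(1+\|A_0\|_2^2)^2}{(1-\|A_0\|_2^2)^2}\Big\}\|\sin\Theta\{U(\varphi),U(\varphi_0)\}\|_F .$$ Moreover, for all such $\varphi,\varphi_0$, $\|\sin\Theta\{U(\varphi),U(\varphi_0)\}\|_F\le\sqrt2\,\|U(\varphi)-U(\varphi_0)\|_F$.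
   Context: Fix $1\le r\le p$. For $A\in\mathbb{R}^{(p-r)\times r}$, $\varphi=\mathrm{vec}(A)$, $X_\varphi=\begin{bmatrix}0_{r\times r}&-A^{T}\\ A&0\end{bmatrix}$, $I_{p\times r}=\begin{bmatrix}I_r\\0\end{bmatrix}$, and $U(\varphi)=(I_p+X_\varphi)(I_p-X_\varphi)^{-1}I_{p\times r}\in\mathbb{O}(p,r)$ (Cayley parameterization; $\mathbb{O}(p,r)$ = $p\times r$ matrices with orthonormal columns). For $U,V\in\mathbb{O}(p,r)$ with singular values $\sigma_1\ge\dots\ge\sigma_r$ of $U^TV$, the canonical angles are $\theta_i=\arccos\sigma_i$ and $\|\sin\Theta(U,V)\|_F=(\sum_{i=1}^r\sin^2\theta_i)^{1/2}$. *)

(* Defs.v *)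
From HB Require Import structures.
From mathcomp Require Import all_boot all_order all_algebra.
From mathcomp Require Import all_classical all_reals all_analysis.
Set Implicit Arguments. Unset Strict Implicit. Unset Printing Implicit Defensive.
Import Order.TTheory GRing.Theory Num.Theory.
Local Open Scope ring_scope.
Local Open Scope classical_set_scope.

Section Defs.
Variable R : realType.

Definition vnorm n (x : 'cV[R]_n) : R := Num.sqrt (\sum_(i < n) x i 0 ^+ 2).

Definition fnorm m n (M : 'M[R]_(m, n)) : R :=
  Num.sqrt (\sum_(i < m) \sum_(j < n) M i j ^+ 2).

Definition spec_norm m n (A : 'M[R]_(m, n)) : R :=
  sup [set vnorm (A *m x) | x in [set x : 'cV[R]_n | vnorm x = 1]].

(* Cayley parameterization, with p = r + k (k = p - r) *)
Definition Xphi r k (A : 'M[R]_(k, r)) : 'M[R]_(r + k) :=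
  block_mx 0 (- A^T) A 0.

Definition Ipr r k : 'M[R]_(r + k, r) := col_mx 1%:M 0.

Definition Ucay r k (A : 'M[R]_(k, r)) : 'M[R]_(r + k, r) :=
  (1%:M + Xphi A) *m invmx (1%:M - Xphi A) *m Ipr r k.

Definition orthogonal_mx n (P : 'M[R]_n) : Prop := P^T *m P = 1%:M.

Definition is_svals n (M : 'M[R]_n) (s : 'rV[R]_n) : Prop :=
  (forall i, 0 <= s 0 i) /\
  (forall i j : 'I_n, (i <= j)%N -> s 0 j <= s 0 i) /\
  exists P Q : 'M[R]_n, orthogonal_mx P /\ orthogonal_mx Q /\
     M = P *m diag_mx s *m Q^T.

(* ||sin Theta||_F computed from the singular values s of U^T V:
   theta_i = arccos sigma_i *)
Definition sinThetaF n (s : 'rV[R]_n) : R :=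
  Num.sqrt (\sum_(i < n) sin (acos (s 0 i)) ^+ 2).

End Defs.

(* Main.v *)
Require Import Defs.
From HB Require Import structures.
From mathcomp Require Import all_boot all_order all_algebra.
From mathcomp Require Import all_classical all_reals all_analysis.
From mathcomp Require Import ring lra.
Import Order.TTheory GRing.Theory Num.Theory.
Set Implicit Arguments. Unset Strict Implicit. Unset Printing Implicit Defensive.
Local Open Scope ring_scope.

Section IP.
Variable R : realType.

Lemma mulss_ge0 (x : R) : 0 <= x * x.
Proof. by rewrite -expr2 sqr_ge0. Qed.

Definition ip m n (X Y : 'M[R]_(m, n)) : R := \sum_i \sum_j X i j * Y i j.
Definition nm m n (X : 'M[R]_(m, n)) : R := Num.sqrt (ip X X).

Lemma ipC m n (X Y : 'M[R]_(m, n)) : ip X Y = ip Y X.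
Proof. by apply: eq_bigr => i _; apply: eq_bigr => j _; rewrite mulrC. Qed.

Lemma ipDl m n (X Y Z : 'M[R]_(m, n)) : ip (X + Y) Z = ip X Z + ip Y Z.
Proof.
rewrite /ip -big_split; apply: eq_bigr => i _; rewrite -big_split.
by apply: eq_bigr => j _; rewrite !mxE mulrDl.
Qed.

Lemma ipZl m n a (X Y : 'M[R]_(m, n)) : ip (a *: X) Y = a * ip X Y.
Proof.
rewrite /ip mulr_sumr; apply: eq_bigr => i _; rewrite mulr_sumr.
by apply: eq_bigr => j _; rewrite !mxE mulrA.
Qed.

Lemma ipNl m n (X Y : 'M[R]_(m, n)) : ip (- X) Y = - ip X Y.
Proof. by rewrite -scaleN1r ipZl mulN1r. Qed.

Lemma ipDr m n (X Y Z : 'M[R]_(m, n)) : ip Z (X + Y) = ip Z X + ip Z Y.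
Proof. by rewrite ipC ipDl !(ipC Z). Qed.
Lemma ipNr m n (X Y : 'M[R]_(m, n)) : ip X (- Y) = - ip X Y.
Proof. by rewrite ipC ipNl ipC. Qed.
Lemma ipBl m n (X Y Z : 'M[R]_(m, n)) : ip (X - Y) Z = ip X Z - ip Y Z.
Proof. by rewrite ipDl ipNl. Qed.
Lemma ipBr m n (X Y Z : 'M[R]_(m, n)) : ip Z (X - Y) = ip Z X - ip Z Y.
Proof. by rewrite ipDr ipNr. Qed.

Lemma ip_ge0 m n (X : 'M[R]_(m, n)) : 0 <= ip X X.
Proof. by apply: sumr_ge0 => i _; apply: sumr_ge0 => j _; rewrite mulss_ge0. Qed.

Lemma ip_tr m n (X Y : 'M[R]_(m, n)) : ip X Y = \tr (X^T *m Y).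
Proof.
rewrite /ip /mxtrace exchange_big; apply: eq_bigr => j _; rewrite !mxE.
by apply: eq_bigr => i _; rewrite mxE.
Qed.

Lemma ip_trmx m n (X Y : 'M[R]_(m, n)) : ip X^T Y^T = ip X Y.
Proof.
rewrite /ip exchange_big; apply: eq_bigr => j _; apply: eq_bigr => i _.
by rewrite !mxE.
Qed.

Lemma ip_orth m n p (U : 'M[R]_(m, n)) (X Y : 'M[R]_(n, p)) :
  U^T *m U = 1%:M -> ip (U *m X) (U *m Y) = ip X Y.
Proof.
by move=> hU; rewrite !ip_tr trmx_mul -mulmxA (mulmxA U^T) hU mul1mx.
Qed.

Lemma ip_adj m n p (A : 'M[R]_(m, n)) (X : 'M[R]_(n, p)) Y :
  ip (A *m X) Y = ip X (A^T *m Y).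
Proof. by rewrite !ip_tr trmx_mul mulmxA. Qed.

Lemma ip_eq0 m n (X : 'M[R]_(m, n)) : ip X X = 0 -> X = 0.
Proof.
move=> /eqP; rewrite psumr_eq0; last by move=> i _; apply: sumr_ge0 => j _; rewrite mulss_ge0.
move=> /allP h; apply/matrixP => i j; rewrite mxE.
have /implyP := h i (mem_index_enum _); rewrite psumr_eq0 //; last by move=> l _; rewrite mulss_ge0.
move=> /(_ isT) /allP /(_ j (mem_index_enum _)) /implyP /(_ isT).
by rewrite mulf_eq0 orbb => /eqP.
Qed.

Lemma ipZr m n a (X Y : 'M[R]_(m, n)) : ip Y (a *: X) = a * ip Y X.
Proof. by rewrite ipC ipZl ipC. Qed.

Lemma CS2 m n (X Y : 'M[R]_(m, n)) : ip X Y ^+ 2 <= ip X X * ip Y Y.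
Proof.
have h t : 0 <= t ^+ 2 * ip X X - 2 * t * ip X Y + ip Y Y.
  have := ip_ge0 (t *: X - Y).
  by rewrite ipBl !ipBr !ipZl !ipZr (ipC Y X); congr (_ <= _); ring.
have [a0|apos] := eqVneq (ip X X) 0.
  have X0 := ip_eq0 a0.
  have -> : ip X Y = 0.
    by rewrite X0; have := ipZl 0 (0 : 'M[R]_(m, n)) Y; rewrite scale0r mul0r.
  by rewrite a0 mul0r expr0n.
have ha : 0 < ip X X by rewrite lt_def apos ip_ge0.
have := h (ip X Y / ip X X).
set a := ip X X; set b := ip Y Y; set c := ip X Y => hh.
have E : a * ((c / a) ^+ 2 * a - 2 * (c / a) * c + b) = a * b - c ^+ 2.
  by field; rewrite /a.
rewrite -subr_ge0 -E; exact: mulr_ge0 (ltW ha) hh.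
Qed.

Lemma nm_ge0 m n (X : 'M[R]_(m, n)) : 0 <= nm X.
Proof. exact: sqrtr_ge0. Qed.

Lemma nm_sqr m n (X : 'M[R]_(m, n)) : nm X ^+ 2 = ip X X.
Proof. by rewrite sqr_sqrtr // ip_ge0. Qed.

Lemma CS m n (X Y : 'M[R]_(m, n)) : `|ip X Y| <= nm X * nm Y.
Proof.
rewrite -sqrtrM ?ip_ge0 // -(sqrtr_sqr (ip X Y)).
by rewrite ler_sqrt ?CS2 // mulr_ge0 ?ip_ge0.
Qed.

Lemma CSl m n (X Y : 'M[R]_(m, n)) : ip X Y <= nm X * nm Y.
Proof. exact: le_trans (ler_norm _) (CS X Y). Qed.

Lemma CSn m n (X Y : 'M[R]_(m, n)) : - ip X Y <= nm X * nm Y.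
Proof. apply: le_trans (CS X Y); rewrite -normrN; exact: ler_norm. Qed.

Lemma nm_triangle m n (X Y : 'M[R]_(m, n)) : nm (X + Y) <= nm X + nm Y.
Proof.
rewrite -ler_sqr ?nonnegrE ?addr_ge0 ?nm_ge0 //.
rewrite nm_sqr ipDl !ipDr (ipC Y X) sqrrD !nm_sqr.
have := CSl X Y; lra.
by rewrite nnegrE nm_ge0.
by rewrite nnegrE addr_ge0 ?nm_ge0.
Qed.

Lemma nm_orth m n p (U : 'M[R]_(m, n)) (X : 'M[R]_(n, p)) :
  U^T *m U = 1%:M -> nm (U *m X) = nm X.
Proof. by move=> h; rewrite /nm ip_orth. Qed.

Lemma nm_trmx m n (X : 'M[R]_(m, n)) : nm X^T = nm X.
Proof. by rewrite /nm ip_trmx. Qed.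

Lemma nm_opp m n (X : 'M[R]_(m, n)) : nm (- X) = nm X.
Proof. by rewrite /nm ipNl ipNr opprK. Qed.

Lemma ip_cols m n (X Y : 'M[R]_(m, n)) :
  ip X Y = \sum_j ip (col j X) (col j Y).
Proof.
rewrite /ip exchange_big; apply: eq_bigr => j _; apply: eq_bigr => i _.
by rewrite big_ord1 !mxE.
Qed.

Lemma psd_mx n p (T : 'M[R]_n) c :
  (forall x : 'cV[R]_n, c * ip x x <= ip x (T *m x)) ->
  forall W : 'M[R]_(n, p), c * ip W W <= ip W (T *m W).
Proof.
move=> h W; rewrite (ip_cols W W) (ip_cols W (T *m W)) mulr_sumr.
apply: ler_sum => j _.
have -> : col j (T *m W) = T *m col j W by rewrite !colE mulmxA.
exact: h.
Qed.

Lemma adj_bound k r (A : 'M[R]_(k, r)) (a : R) : 0 <= a ->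
  (forall x : 'cV[R]_r, ip (A *m x) (A *m x) <= a ^+ 2 * ip x x) ->
  forall v : 'cV[R]_k, ip (A^T *m v) (A^T *m v) <= a ^+ 2 * ip v v.
Proof.
move=> ha hb v; set y := A^T *m v.
have e1 : ip y y = ip v (A *m y) by rewrite {1}/y ip_adj trmxK.
have e2 : nm (A *m y) <= a * nm y.
  rewrite /nm -(ger0_norm ha) -sqrtr_sqr -sqrtrM ?sqr_ge0 // ler_sqrt //.
  by rewrite mulr_ge0 ?sqr_ge0 ?ip_ge0.
have e3 : nm y ^+ 2 <= nm v * (a * nm y).
  rewrite nm_sqr e1; apply: le_trans (CSl _ _) _.
  exact: (ler_wpM2l (nm_ge0 v) e2).
have e4 : nm y <= a * nm v.
  have [y0|ypos] := eqVneq (nm y) 0; first by rewrite y0 mulr_ge0 ?nm_ge0.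
  have yp : 0 < nm y by rewrite lt_def ypos nm_ge0.
  rewrite -(ler_pM2r yp) -expr2; apply: le_trans e3 _.
  by rewrite mulrA (mulrC (nm v)).
rewrite -!nm_sqr -exprMn ler_sqr ?nnegrE ?mulr_ge0 ?nm_ge0 //.
Qed.

Lemma cay_lb k r (A : 'M[R]_(k, r)) (a : R) (T : 'M[R]_r) : 0 <= a ->
  (forall x : 'cV[R]_r, ip (A *m x) (A *m x) <= a ^+ 2 * ip x x) ->
  (1%:M + A^T *m A) *m T = 1%:M - A^T *m A -> T^T = T ->
  forall x : 'cV[R]_r, (1 - a ^+ 2) * ip x x <= (1 + a ^+ 2) * ip x (T *m x).
Proof.
move=> ha hb hT Tsym x.
set G := A^T *m A.
have GT : G^T = G by rewrite /G trmx_mul trmxK.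
have hT' : T *m (1%:M + G) = 1%:M - G.
  by have := congr1 trmx hT; rewrite trmx_mul Tsym linearD linearB /= trmx1 GT.
have h2 : (1%:M + G) *m (1%:M + T) = 2%:M.
  rewrite mulmxDr hT mulmx1 addrACA subrr addr0; apply/matrixP => i j.
  by rewrite !mxE; case: (i == j); rewrite /= ?mulr0n ?addr0.
set w := 2^-1 *: ((1%:M + T) *m x).
have hx : (1%:M + G) *m w = x.
  by rewrite /w -scalemxAr mulmxA h2 mul_scalar_mx scalerA mulVf ?scale1r // pnatr_eq0.
have hTx : T *m x = (1%:M - G) *m w by rewrite -hx mulmxA hT'.
have ew : (1%:M + G) *m w = w + G *m w by rewrite mulmxDl mul1mx.
have ew' : (1%:M - G) *m w = w - G *m w by rewrite mulmxBl mul1mx.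
set g := ip w (G *m w).
have eg : g = ip (A *m w) (A *m w) by rewrite /g ip_adj /G mulmxA.
have h1 : ip (G *m w) (G *m w) <= a ^+ 2 * g.
  by rewrite eg /G -mulmxA; apply: adj_bound.
have h3 : g <= a ^+ 2 * ip w w by rewrite eg hb.
have E1 : ip x (T *m x) = ip w w - ip (G *m w) (G *m w).
  by rewrite hTx -{1}hx ew ew' ipDl !ipBr (ipC (G *m w) w); ring.
have E2 : ip x x = ip w w + 2 * g + ip (G *m w) (G *m w).
  by rewrite -hx ew ipDl !ipDr (ipC (G *m w) w) /g; ring.
rewrite E1 E2.
lra.
Qed.

End IP.

Section Cay.
Variable R : realType.

Lemma sym_of n (G T : 'M[R]_n) : G^T = G ->
  (1%:M + G) *m T = 1%:M - G -> T^T = T.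
Proof.
move=> GT hT.
have hT' : T^T *m (1%:M + G) = 1%:M - G.
  by have := congr1 trmx hT; rewrite trmx_mul linearD linearB /= trmx1 GT.
have h2 : (1%:M + G) *m (1%:M + T) = 2%:M.
  rewrite mulmxDr hT mulmx1 addrACA subrr addr0; apply/matrixP => i j.
  by rewrite !mxE; case: (i == j); rewrite /= ?mulr0n ?addr0.
set W := 2^-1 *: (1%:M + T).
have hW : (1%:M + G) *m W = 1%:M.
  by rewrite /W -scalemxAr h2 scale_scalar_mx mulVf // pnatr_eq0.
have hW' := mulmx1C hW.
have e1 : 1%:M - G = 2%:M - (1%:M + G).
  apply/matrixP => i j; rewrite !mxE; case: (i == j); rewrite /= ?mulr0n; lra.
have eT : T = W *m (1%:M - G) by rewrite -hT mulmxA hW' mul1mx.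
have eT' : T^T = (1%:M - G) *m W by rewrite -hT' -mulmxA hW mulmx1.
rewrite eT' [RHS]eT e1 mulmxBl mulmxBr hW hW'.
by rewrite mul_scalar_mx mul_mx_scalar.
Qed.

Lemma Xphi_tr r k (A : 'M[R]_(k, r)) : (Xphi A)^T = - Xphi A.
Proof.
by rewrite /Xphi tr_block_mx opp_block_mx !trmx0 !oppr0 opprK linearN /= trmxK.
Qed.

Lemma skew_unit n (X : 'M[R]_n) : X^T = - X -> 1%:M - X \in unitmx.
Proof.
move=> hX; rewrite -row_free_unit; apply: inj_row_free => v hv.
have ev : v = v *m X by apply/eqP; rewrite -subr_eq0 -[v in v - _]mulmx1 -mulmxBr hv.
set s := ip v (v *m X).
have : s = - s.
  rewrite {1}/s -ip_trmx trmx_mul hX mulNmx ipNr; congr (- _).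
  by rewrite /s [RHS]ipC -[RHS]ip_trmx trmx_mul ip_adj trmxK.
move=> es; have s0 : s = 0 by lra.
by apply: ip_eq0; rewrite {2}ev.
Qed.

Lemma cay_eq r k (A : 'M[R]_(k, r)) :
  (1%:M - Xphi A) *m Ucay A = (1%:M + Xphi A) *m Ipr R r k.
Proof.
set X := Xphi A.
have u := skew_unit (Xphi_tr A).
have c : (1%:M - X) *m (1%:M + X) = (1%:M + X) *m (1%:M - X).
  rewrite mulmxDr mulmxBr !mulmx1 mulmxBl mulmxDl !mul1mx.
  by rewrite addrA subrK opprD addrA addrK.
by rewrite /Ucay !mulmxA c -(mulmxA (1%:M + X)) mulmxV // mulmx1.
Qed.

Lemma cay_orth r k (A : 'M[R]_(k, r)) : (Ucay A)^T *m Ucay A = 1%:M.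
Proof.
set X := Xphi A.
have hX : X^T = - X := Xphi_tr A.
have u := skew_unit hX.
have u' : 1%:M + X \in unitmx.
  by rewrite -unitmx_tr linearD /= trmx1 hX.
have t1 : (1%:M - X)^T = 1%:M + X by rewrite linearB /= trmx1 hX opprK.
have t2 : (1%:M + X)^T = 1%:M - X by rewrite linearD /= trmx1 hX.
have c : (1%:M - X) *m (1%:M + X) = (1%:M + X) *m (1%:M - X).
  rewrite mulmxDr mulmxBr !mulmx1 mulmxBl mulmxDl !mul1mx.
  by rewrite addrA subrK opprD addrA addrK.
rewrite /Ucay -/X !trmx_mul trmx_inv t1 t2.
have -> : (Ipr R r k)^T *m (invmx (1%:M + X) *m (1%:M - X)) *m
  ((1%:M + X) *m invmx (1%:M - X) *m Ipr R r k) =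
  (Ipr R r k)^T *m (invmx (1%:M + X) *m ((1%:M - X) *m (1%:M + X)) *m invmx (1%:M - X)) *m Ipr R r k.
  by rewrite !mulmxA.
rewrite c !mulmxA -(mulmxA _ (invmx (1%:M + X))) mulVmx // mulmx1.
rewrite -(mulmxA _ (1%:M - X)) mulmxV // mulmx1.
by rewrite /Ipr tr_col_mx mul_row_col mulmx0 addr0 trmx1 mulmx1.
Qed.

Lemma cay_top r k (A : 'M[R]_(k, r)) :
  (1%:M + A^T *m A) *m usubmx (Ucay A) = 1%:M - A^T *m A /\
  (usubmx (Ucay A))^T = usubmx (Ucay A).
Proof.
set T := usubmx (Ucay A); set B := dsubmx (Ucay A).
have e := cay_eq A.
have hm : 1%:M - Xphi A = block_mx 1%:M A^T (-A) 1%:M.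
  by rewrite /Xphi (scalar_mx_block r k 1) opp_block_mx add_block_mx !subr0 !sub0r opprK.
have hp : (1%:M + Xphi A) *m Ipr R r k = col_mx 1%:M A.
  rewrite /Xphi (scalar_mx_block r k 1) add_block_mx !addr0 !add0r /Ipr mul_block_col.
  by rewrite !mulmx0 !mulmx1 !addr0.
rewrite hm hp -(vsubmxK (Ucay A)) -/T -/B mul_block_col !mul1mx in e.
case: (eq_col_mx e) => e1 e2.
have eB : B = A + A *m T by rewrite -{1}e2 mulNmx addrAC addNr add0r.
have hT : (1%:M + A^T *m A) *m T = 1%:M - A^T *m A.
  rewrite mulmxDl mul1mx -e1 eB mulmxDr mulmxA.
  by rewrite addrA addrAC addrK.
split => //; apply: sym_of hT.
by rewrite trmx_mul trmxK.
Qed.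

End Cay.

Section Misc.
Variable R : realType.

Lemma vnormE n (x : 'cV[R]_n) : vnorm x = nm x.
Proof.
rewrite /vnorm /nm /ip; congr Num.sqrt; apply: eq_bigr => i _.
rewrite big_ord1 expr2 //.
Qed.

Lemma fnormE m n (X : 'M[R]_(m, n)) : fnorm X = nm X.
Proof.
by rewrite /fnorm /nm /ip; congr Num.sqrt; apply: eq_bigr => i _;
 apply: eq_bigr => j _; rewrite expr2.
Qed.

Lemma ip_mul_le k r (A : 'M[R]_(k, r)) (x : 'cV[R]_r) :
  ip (A *m x) (A *m x) <= ip A A * ip x x.
Proof.
rewrite {1}/ip /ip mulr_suml; apply: ler_sum => i _.
rewrite big_ord1.
have -> : (A *m x) i 0 = ip (row i A)^T x.
  by rewrite mxE /ip; apply: eq_bigr => j _; rewrite big_ord1 !mxE.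
have -> : \sum_j A i j * A i j = ip (row i A)^T (row i A)^T.
  by rewrite /ip; apply: eq_bigr => j _; rewrite big_ord1 !mxE.
by rewrite -expr2 CS2.
Qed.

Lemma spec_bound k r (A : 'M[R]_(k, r)) (x : 'cV[R]_r) :
  ip (A *m x) (A *m x) <= spec_norm A ^+ 2 * ip x x /\
  (0 < ip x x -> 0 <= spec_norm A).
Proof.
set a := spec_norm A.
have [x0|xpos] := eqVneq (ip x x) 0.
  have x0' := ip_eq0 x0.
  split; last by rewrite x0 ltxx.
  have e0 : A *m x = 0 by rewrite x0' mulmx0.
  rewrite e0 x0 mulr0 /ip big1 // => i _; rewrite big1 // => j _.
  by rewrite mxE mul0r.
have hx : 0 < ip x x by rewrite lt_def xpos ip_ge0.
set c := (nm x)^-1.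
have nx : 0 < nm x by rewrite sqrtr_gt0.
set u := c *: x.
have hu : vnorm u = 1.
  rewrite vnormE /nm /u ipZl ipZr mulrA -expr2 /c exprVn nm_sqr mulVf //.
  by rewrite sqrtr1.
have hs : has_sup [set vnorm (A *m x) | x in [set x : 'cV[R]_r | vnorm x = 1]].
  split; first by exists (vnorm (A *m u)), u.
  exists (Num.sqrt (ip A A)) => _ [y /= hy <-].
  rewrite vnormE /nm ler_sqrt ?ip_ge0 //.
  apply: le_trans (ip_mul_le A y) _.
  by rewrite -(nm_sqr y) -vnormE hy expr1n mulr1.
have hb : vnorm (A *m u) <= a by apply: sup_upper_bound hs _ _; exists u.
have h0 : 0 <= vnorm (A *m u) by exact: sqrtr_ge0.
have ha : 0 <= a by exact: le_trans h0 hb.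
split; last by move=> _.
have hsq : nm (A *m u) ^+ 2 <= a ^+ 2.
  by rewrite -vnormE ler_sqr ?nnegrE.
rewrite nm_sqr /u -scalemxAr ipZl ipZr mulrA -expr2 /c exprVn nm_sqr in hsq.
by rewrite -ler_pdivrMr // mulrC.
Qed.

Lemma sin_acos2 (x : R) : -1 <= x <= 1 -> sin (acos x) ^+ 2 = 1 - x ^+ 2.
Proof.
by move=> hx; rewrite sin2cos2 acosK //; rewrite in_itv /=.
Qed.

Lemma diag_le1 p r (W1 W2 : 'M[R]_(p, r)) i :
  W1^T *m W1 = 1%:M -> W2^T *m W2 = 1%:M -> (W1^T *m W2) i i <= 1.
Proof.
move=> h1 h2.
have e : forall (X Y : 'M[R]_(p, r)), (X^T *m Y) i i = \sum_l X l i * Y l i.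
  by move=> X Y; rewrite mxE; apply: eq_bigr => l _; rewrite mxE.
have := congr1 (fun M : 'M[R]_r => M i i) h1; have := congr1 (fun M : 'M[R]_r => M i i) h2.
rewrite /= !e !mxE eqxx /= => s2 s1.
have : \sum_l (2 * (W1 l i * W2 l i)) <= \sum_l (W1 l i * W1 l i + W2 l i * W2 l i).
  apply: ler_sum => l _; set u := W1 l i; set v := W2 l i.
  have := mulss_ge0 (u - v); nra.
rewrite -mulr_sumr big_split /= s1 s2; lra.
Qed.

Lemma ip_usub m k n (X : 'M[R]_(m + k, n)) :
  ip (usubmx X) (usubmx X) <= ip X X.
Proof.
have -> : ip X X = ip (col_mx (usubmx X) (dsubmx X)) (col_mx (usubmx X) (dsubmx X)).
  by rewrite vsubmxK.
rewrite [X in _ <= X]/ip big_split_ord /=.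
have -> : \sum_(i < m) \sum_j col_mx (usubmx X) (dsubmx X) (lshift k i) j *
        col_mx (usubmx X) (dsubmx X) (lshift k i) j = ip (usubmx X) (usubmx X).
  by apply: eq_bigr => i _; apply: eq_bigr => j _; rewrite col_mxEu.
have -> : \sum_(i < k) \sum_j col_mx (usubmx X) (dsubmx X) (rshift m i) j *
        col_mx (usubmx X) (dsubmx X) (rshift m i) j = ip (dsubmx X) (dsubmx X).
  by apply: eq_bigr => i _; apply: eq_bigr => j _; rewrite col_mxEd.
by rewrite lerDl ip_ge0.
Qed.

Lemma tr_diag_mul n (s : 'rV[R]_n) (N : 'M[R]_n) :
  \tr (diag_mx s *m N) = \sum_i s 0 i * N i i.
Proof. by rewrite /mxtrace; apply: eq_bigr => i _; rewrite mul_diag_mx mxE. Qed.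

End Misc.

Unset Implicit Arguments.
Set Strict Implicit.

Theorem theorem5 (R : realType) (r k : nat) (hr : (1 <= r)%N)
  (A A0 : 'M[R]_(k, r)) (s : 'rV[R]_r) :
  spec_norm A < 1 -> spec_norm A0 < 1 ->
  is_svals ((Ucay A)^T *m Ucay A0) s ->
  (sinThetaF s <= (1 - spec_norm A0 ^+ 2) ^+ 2 / (8 * (1 + spec_norm A0 ^+ 2) ^+ 2) ->
   fnorm (Ucay A - Ucay A0) <=
     4 * (1 + 32 * Num.sqrt 2 * (1 + spec_norm A0 ^+ 2) ^+ 2
                 / (1 - spec_norm A0 ^+ 2) ^+ 2) * sinThetaF s)
  /\ sinThetaF s <= Num.sqrt 2 * fnorm (Ucay A - Ucay A0).
Proof.
move=> hA hA0 [s_ge0 [_ [P [Q [hP [hQ hM]]]]]].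
rewrite /orthogonal_mx in hP hQ.
have hU := cay_orth A; have hV := cay_orth A0.
set U := Ucay A in hM hU *; set V := Ucay A0 in hM hV *.
have hP' := mulmx1C hP; have hQ' := mulmx1C hQ.
have hS : (U *m P)^T *m (V *m Q) = diag_mx s.
  by rewrite trmx_mul -mulmxA (mulmxA U^T) hM !mulmxA hP mul1mx -mulmxA hQ mulmx1.
have s_le1 i : s 0 i <= 1.
  have -> : s 0 i = diag_mx s i i by rewrite mxE eqxx mulr1n.
  rewrite -hS; apply: diag_le1.
    by rewrite trmx_mul -mulmxA (mulmxA U^T) hU mul1mx hP.
  by rewrite trmx_mul -mulmxA (mulmxA V^T) hV mul1mx hQ.
set sigma := \sum_i (1 - s 0 i ^+ 2).
have hsin : sinThetaF s = Num.sqrt sigma.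
  rewrite /sinThetaF; congr Num.sqrt; apply: eq_bigr => i _.
  by apply: sin_acos2; rewrite s_le1 andbT (le_trans _ (s_ge0 i)) // lerN10.
have rE : r%:R = \sum_(i < r) (1 : R) by rewrite sumr_const card_ord.
have ipUU : ip U U = r%:R by rewrite ip_tr hU mxtrace1.
have ipVV : ip V V = r%:R by rewrite ip_tr hV mxtrace1.
set d := fun i => (Q^T *m P) i i.
have d_le1 i : d i <= 1 by apply: diag_le1.
have ipUV : ip U V = \sum_i s 0 i * d i.
  by rewrite ip_tr hM -mulmxA mxtrace_mulC -mulmxA tr_diag_mul.
split; last first.
  rewrite hsin fnormE /nm -sqrtrM // ler_sqrt; last by rewrite mulr_ge0 ?ip_ge0.
  rewrite ipBl !ipBr ipUU ipVV (ipC V U) ipUV rE.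
  have : sigma <= \sum_i 4 * (1 - s 0 i * d i).
    apply: ler_sum => i _; have := s_ge0 i; have := s_le1 i; have := d_le1 i.
    by move=> h1 h2 h3; nra.
  rewrite -mulr_sumr sumrB; lra.
move=> _.
set O := P *m Q^T.
have hO : O^T *m O = 1%:M.
  by rewrite /O trmx_mul trmxK mulmxA -(mulmxA Q) hP mulmx1 hQ'.
have hO' : O *m O^T = 1%:M.
  by rewrite /O trmx_mul trmxK mulmxA -(mulmxA P) hQ mulmx1 hP'.
have trOM : \tr (O^T *m (U^T *m V)) = \sum_i s 0 i.
  have -> : O^T *m (U^T *m V) = Q *m (diag_mx s *m Q^T).
    by rewrite hM /O trmx_mul trmxK !mulmxA -(mulmxA Q P^T P) hP mulmx1.
  by rewrite mxtrace_mulC -mulmxA hQ mulmx1 mxtrace_diag.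
set W := U *m O - V.
have ipW : ip W W <= 2 * sigma.
  rewrite /W ipBl !ipBr ip_orth // ipVV (ipC V) ip_tr hO mxtrace1.
  have -> : ip (U *m O) V = \sum_i s 0 i by rewrite ip_tr trmx_mul -mulmxA trOM.
  rewrite rE.
  have : \sum_i 2 * (1 - s 0 i) <= \sum_i 2 * (1 - s 0 i ^+ 2).
    apply: ler_sum => i _; have := s_ge0 i; have := s_le1 i.
    by move=> h1 h2; nra.
  rewrite -!mulr_sumr !sumrB.
  have sigE : sigma = \sum_(i < r) 1 - \sum_i s 0 i ^+ 2 by rewrite /sigma sumrB.
  rewrite sigE; lra.
have sig0 : 0 <= sigma.
  apply: sumr_ge0 => i _; have := s_ge0 i; have := s_le1 i; move=> h1 h2; nra.
have nW : nm W <= Num.sqrt 2 * Num.sqrt sigma.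
  by rewrite /nm -sqrtrM // ler_sqrt // mulr_ge0.
have [hT Tsym] := cay_top A; have [hT0 T0sym] := cay_top A0.
rewrite -/U in hT Tsym; rewrite -/V in hT0 T0sym.
set T := usubmx U in hT Tsym; set T0 := usubmx V in hT0 T0sym.
set E := T *m O - T0.
have hE : E = usubmx W by rewrite /E /W linearB /= mul_usub_mx.
have nE : nm E <= nm W by rewrite hE /nm ler_sqrt ?ip_ge0 // ip_usub.
set Z := O^T - 1%:M.
have hY : E^T - E *m O^T = Z *m T + T0 *m Z.
  rewrite /E /Z linearB /= trmx_mul Tsym T0sym mulmxBl -mulmxA hO' mulmx1.
  rewrite mulmxBl mulmxBr mul1mx mulmx1.
  set X1 := O^T *m T; set X2 := T0 *m O^T.
  by apply/matrixP => i j; rewrite !mxE; lra.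
set e0 : 'cV[R]_r := delta_mx (Ordinal hr) 0.
have ie0 : 0 < ip e0 e0.
  rewrite ip_tr /e0 trmx_delta mul_delta_mx /mxtrace big_ord1 mxE !eqxx /=.
  exact: ltr01.
set a := spec_norm A; set a0 := spec_norm A0.
have ha : 0 <= a by case: (spec_bound A e0) => _ /(_ ie0).
have ha0 : 0 <= a0 by case: (spec_bound A0 e0) => _ /(_ ie0).
have hbA (x : 'cV[R]_r) : ip (A *m x) (A *m x) <= a ^+ 2 * ip x x by case: (spec_bound A x).
have hbA0 (x : 'cV[R]_r) : ip (A0 *m x) (A0 *m x) <= a0 ^+ 2 * ip x x by case: (spec_bound A0 x).
have lbT := cay_lb ha hbA hT Tsym.
have lbT0 := cay_lb ha0 hbA0 hT0 T0sym.
have hTpsd (x : 'cV[R]_r) : 0 * ip x x <= ip x (T *m x).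
  have := lbT x; have := ip_ge0 x; have : 0 <= a ^+ 2 by rewrite sqr_ge0.
  have : a ^+ 2 < 1 by rewrite expr_lt1.
  move=> h1 h2 h3 h4; rewrite mul0r; nra.
have b1 : 0 < 1 + a0 ^+ 2 by rewrite ltr_pwDl ?sqr_ge0.
have b2 : a0 ^+ 2 < 1 by rewrite expr_lt1.
set c0 := (1 - a0 ^+ 2) / (1 + a0 ^+ 2).
have hT0psd (x : 'cV[R]_r) : c0 * ip x x <= ip x (T0 *m x).
  by rewrite /c0 mulrAC ler_pdivrMr //; have := lbT0 x; lra.
have c0pos : 0 < c0 by rewrite /c0 divr_gt0 // subr_gt0.
have hZ1 : 0 <= ip Z (Z *m T).
  rewrite -ip_trmx trmx_mul Tsym; have := psd_mx hTpsd Z^T; rewrite mul0r.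
  done.
have hZ2 : c0 * ip Z Z <= ip Z (T0 *m Z) by exact: psd_mx.
have nEO : nm (E *m O^T) = nm E by rewrite -nm_trmx trmx_mul trmxK nm_orth // nm_trmx.
have hZ3 : ip Z (E^T - E *m O^T) <= 2 * (nm Z * nm E).
  rewrite ipBr; have := CSl Z E^T; have := CSn Z (E *m O^T).
  rewrite nEO nm_trmx; lra.
have hZ4 : c0 * nm Z ^+ 2 <= 2 * (nm Z * nm E).
  by rewrite nm_sqr; move: hZ3; rewrite hY ipDr; lra.
have hZ5 : c0 * nm Z <= 2 * nm E.
  have [z0|zpos] := eqVneq (nm Z) 0; first by rewrite z0 mulr0 mulr_ge0 ?nm_ge0.
  have zp : 0 < nm Z by rewrite lt_def zpos nm_ge0.
  rewrite -(ler_pM2r zp); move: hZ4; rewrite expr2; lra.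
have hUV : nm (U - V) <= nm Z + nm W.
  have -> : U - V = U *m (1%:M - O) + W by rewrite /W mulmxBr mulmx1 addrA subrK.
  apply: le_trans (nm_triangle _ _) _; rewrite nm_orth //.
  by rewrite -opprB nm_opp -nm_trmx /Z linearB /= trmx1.
rewrite fnormE hsin.
set t := Num.sqrt sigma; set w := Num.sqrt 2.
have t0 : 0 <= t by exact: sqrtr_ge0.
have w0 : 0 <= w by exact: sqrtr_ge0.
have ww : w ^+ 2 = 2 by rewrite sqr_sqrtr.
have w2 : w <= 2 by nra.
set q := (1 + a0 ^+ 2) / (1 - a0 ^+ 2).
have bpos : 0 < 1 - a0 ^+ 2 by rewrite subr_gt0.
have cq : c0 * q = 1 by rewrite /c0 /q; field; apply/andP; split; rewrite gt_eqF // lt0r.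
have q1 : 1 <= q.
  rewrite /q ler_pdivlMr // mul1r; have : 0 <= a0 ^+ 2 by rewrite sqr_ge0.
  lra.
have eK : 32 * w * (1 + a0 ^+ 2) ^+ 2 / (1 - a0 ^+ 2) ^+ 2 = 32 * w * q ^+ 2.
  by rewrite /q expr_div_n !mulrA.
rewrite eK.
have hz : nm Z <= 2 * w * t * q.
  have h1 : c0 * nm Z <= 2 * (w * t) by move: nW; rewrite -/t -/w; lra.
  have h2 : c0 * nm Z * q <= 2 * (w * t) * q by rewrite ler_wpM2r // (le_trans _ q1).
  by move: h2; rewrite mulrAC cq mul1r mulrA.
have wt0 : 0 <= w * t by rewrite mulr_ge0.
have h3 : w * t * q <= w * t * q ^+ 2.
  by rewrite ler_wpM2l // expr2 ler_peMr // (le_trans _ q1).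
have h4 : w * t <= 2 * t by rewrite ler_wpM2r.
have h5 : 0 <= w * t * q ^+ 2 by rewrite mulr_ge0 ?sqr_ge0.
move: nW; rewrite -/t -/w => nW'.
lra.
Qed.
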